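(* Fix $i\in\{1,\dots,k\}$ and $\hat z\in[2^n]$, and let $m_1,m_2\in\mathcal{M}^{\text{good}}$ satisfy $z'_i(m_1)=z'_i(m_2)=\hat z$ and $b_i(m_1)\ne b_i(m_2)$. Then there exists an element of $\mathcal{B}^{\text{err}}$ that the decoder of terminal $t$ maps to $m_1$ or to $m_2$.
   Context: Setting. $\mathcal{N}$ is a directed network containing nodes $s_1,\dots,s_k,t_1,\dots,t_k$. The network $\mathcal{G}$ is obtained from $\mathcal{N}$ by adding new nodes $s,t,A_1,\dots,A_k,B_1,\dots,B_k$ and, for each $i$, the unit-capacity edges $a_i=(s,A_i)$, two parallel edges $x_i,y_i$ from $A_i$ to $B_i$, $z_i=(A_i,s_i)$, $z'_i=(t_i,B_i)$, and $b_i=(B_i,t)$; the incoming edges of $t$ are exactly $b_1,\dots,b_k$. Admissible error patterns $\boldsymbol r=(r_e)$ are those in which at most one edge $e$ has $r_e\neq0$, with $e\notin\{a_1,\dots,a_k,b_1,\dots,b_k\}$. The output of an edge is its input XOR $r_e$. Let $\mathcal{C}$ be a length-$n$ network code on $\mathcal{G}$. The source $s$ has message $m\in[2^{kn}]$, where $[N]=\{1,\dots,N\}$. An edge $e=(u,v)$ of capacity $c_e$ carries a value in $[2^{nc_e}]$ computed from the signals on the incoming edges of $u$ (and from $m$ if $u=s$). The terminal $t$ has a decoder mapping each tuple in $[2^n]^k$ received on $(b_1,\dots,b_k)$ to a message. For an edge $e$, let $e(m,\boldsymbol r)$ be the signal received on $e$ under message $m$ and error pattern $\boldsymbol r$, and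 let $e(m)=e(m,\boldsymbol 0)$. Write $\boldsymbol b(m)=(b_1(m),\dots,b_k(m))$. Let $\mathcal{M}^{\text{good}}$ be the set of messages $m$ such that $t$ decodes to $m$ under every admissible error pattern when $m$ is sent. Let $\mathcal{B}^{\text{good}}=\{\boldsymbol b(m):m\in\mathcal{M}^{\text{good}}\}$ and $\mathcal{B}^{\text{err}}=[2^n]^k\setminus\mathcal{B}^{\text{good}}$. *)

(* Defs.v *)
From mathcomp Require Import all_boot.
Set Implicit Arguments. Unset Strict Implicit. Unset Printing Implicit Defensive.

Inductive gnode (VN : Type) (k : nat) : Type :=
  | NOld of VN | Ns | Nt | NA of 'I_k | NB of 'I_k.

Inductive gedge (EN : Type) (k : nat) : Type :=
  | EOld of EN | Ea of 'I_k | Ex of 'I_k | Ey of 'I_k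
  | Ez of 'I_k | Ez' of 'I_k | Eb of 'I_k.

Arguments Ns {VN k}. Arguments Nt {VN k}.
Arguments NOld {VN k}. Arguments NA {VN k}. Arguments NB {VN k}.
Arguments EOld {EN k}. Arguments Ea {EN k}. Arguments Ex {EN k}.
Arguments Ey {EN k}. Arguments Ez {EN k}. Arguments Ez' {EN k}.
Arguments Eb {EN k}.

Section G.
Variables (VN EN : Type) (k : nat).
Variables (tailN headN : EN -> VN) (capN : EN -> nat) (sN tN : 'I_k -> VN).

Definition tailG (e : gedge EN k) : gnode VN k :=
  match e with
  | EOld e0 => NOld (tailN e0)
  | Ea _ => Ns
  | Ex i | Ey i | Ez i => NA i
  | Ez' i => NOld (tN i)
  | Eb i => NB i
  end.

Definition headG (e : gedge EN k) : gnode VN k :=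
  match e with
  | EOld e0 => NOld (headN e0)
  | Ea i => NA i
  | Ex i | Ey i | Ez' i => NB i
  | Ez i => NOld (sN i)
  | Eb _ => Nt
  end.

Definition capG (e : gedge EN k) : nat :=
  match e with EOld e0 => capN e0 | _ => 1 end.

Definition acyclicN : Prop :=
  exists rank : VN -> nat, forall e, rank (tailN e) < rank (headN e).

Variable n : nat.

(* messages m in [2^(kn)], represented 0-based as 'I_(2^(k n)) *)
Definition msg := 'I_(2 ^ (k * n)).

(* A length-n network code on G: edge e carries a value in [2^(n c_e)]
   (0-based: a nat < 2^(n c_e)) computed from the signals on the incoming
   edges of its tail u (and from m if u = s). *)
Definition is_code (enc : gedge EN k -> msg -> (gedge EN k -> nat) -> nat) : Prop :=
  [/\ forall e m sg, enc e m sg < 2 ^ (n * capG e),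
      forall e m1 m2 sg, tailG e <> Ns -> enc e m1 sg = enc e m2 sg
    & forall e m sg1 sg2,
        (forall e', headG e' = tailG e -> sg1 e' = sg2 e') ->
        enc e m sg1 = enc e m sg2].

Definition admissible (r : gedge EN k -> nat) : Prop :=
  [/\ forall e, r e < 2 ^ (n * capG e),
      forall e e', r e <> 0 -> r e' <> 0 -> e = e'
    & forall i, r (Ea i) = 0 /\ r (Eb i) = 0].

Definition no_err : gedge EN k -> nat := fun _ => 0.

(* sig m r e = e(m, r): the output of each edge is its (encoded) input XOR r_e.
   (G is acyclic, so these equations determine the signals uniquely.) *)
Definition is_signal (enc : gedge EN k -> msg -> (gedge EN k -> nat) -> nat)
    (sig : msg -> (gedge EN k -> nat) -> gedge EN k -> nat) : Prop :=
  forall m r, admissible r ->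
    forall e, sig m r e = Nat.lxor (enc e m (sig m r)) (r e).

Variables (sig : msg -> (gedge EN k -> nat) -> gedge EN k -> nat)
          (dec : {ffun 'I_k -> nat} -> msg).

Definition bvec (m : msg) (r : gedge EN k -> nat) : {ffun 'I_k -> nat} :=
  [ffun j => sig m r (Eb j)].

Definition Mgood (m : msg) : Prop :=
  forall r, admissible r -> dec (bvec m r) = m.

Definition Bgood (beta : {ffun 'I_k -> nat}) : Prop :=
  exists m, Mgood m /\ bvec m no_err = beta.

Definition Berr (beta : {ffun 'I_k -> nat}) : Prop :=
  (forall j, beta j < 2 ^ n) /\ ~ Bgood beta.

End G.

(* Main.v *)
Require Import Defs.
From Stdlib Require Import PeanoNat Lia.
From mathcomp Require Import all_boot.
From mathcomp Require Import zify.

Lemma expn_pow a b : a ^ b = Nat.pow a b.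
Proof. by elim: b => //= b IH; rewrite expnS IH multE. Qed.

Lemma lxor_lt_std a b n : (a < Nat.pow 2 n)%coq_nat -> (b < Nat.pow 2 n)%coq_nat ->
  (Nat.lxor a b < Nat.pow 2 n)%coq_nat.
Proof.
intros Ha Hb.
destruct (Nat.eq_dec a 0) as [->|Ha0]; [now rewrite Nat.lxor_0_l|].
destruct (Nat.eq_dec b 0) as [->|Hb0]; [now rewrite Nat.lxor_0_r|].
destruct (Nat.eq_dec (Nat.lxor a b) 0) as [->|Hc0].
{ pose proof (Nat.pow_nonzero 2 n). lia. }
apply Nat.log2_lt_pow2; [lia|].
apply Nat.log2_lt_pow2 in Ha; [|lia].
apply Nat.log2_lt_pow2 in Hb; [|lia].
pose proof (Nat.log2_lxor a b). lia.
Qed.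

Lemma lxor_lt a b n : a < 2 ^ n -> b < 2 ^ n -> Nat.lxor a b < 2 ^ n.
Proof. rewrite !expn_pow; move=> /ltP Ha /ltP Hb; apply/ltP; exact: lxor_lt_std. Qed.

Section Main.
Variables (VN EN : finType) (k : nat)
    (tailN headN : EN -> VN) (capN : EN -> nat) (sN tN : 'I_k -> VN) (n : nat)
    (enc : gedge EN k -> msg k n -> (gedge EN k -> nat) -> nat)
    (sig : msg k n -> (gedge EN k -> nat) -> gedge EN k -> nat)
    (dec : {ffun 'I_k -> nat} -> msg k n)
    (hacyc : acyclicN tailN headN)
    (hcode : is_code tailN headN capN sN tN (n:=n) enc)
    (hsig : is_signal capN (n:=n) enc sig).

Lemma noerr_adm : admissible capN n (@no_err EN k).
Proof. split=> // e; by rewrite /no_err expn_gt0. Qed.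

Lemma sig_bound m r e : admissible capN n r -> sig m r e < 2 ^ (n * capG capN e).
Proof.
move=> hr; rewrite hsig //; case: hcode => hb _ _; case: hr => hr _ _.
exact: lxor_lt.
Qed.

Lemma grank_ex : exists gr : gnode VN k -> nat,
  forall e, gr (tailG tailN tN e) < gr (headG headN sN e).
Proof.
case: hacyc => rk hrk.
pose M := (\max_(v : VN) rk v) + 3.
exists (fun x => match x with Ns => 0 | NA _ => 1 | NOld v => rk v + 2
                 | NB _ => M | Nt => M.+1 end).
have HM v : rk v + 2 < M.
  by rewrite /M; have := @leq_bigmax VN rk v; lia.
case=> [e|j|j|j|j|j|j] /=; try lia.
  by rewrite ltn_add2r.
exact: HM.
Qed.

Lemma stable i m r r' : admissible capN n r -> admissible capN n r' ->
  (forall e, r e = r' e \/ e = Ex i \/ e = Ey i) ->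
  forall e, e <> Ex i -> e <> Ey i -> e <> Eb i -> sig m r e = sig m r' e.
Proof.
move=> hr hr' hrr.
case: grank_ex => gr hgr.
suff H : forall N e, gr (tailG tailN tN e) < N ->
    e <> Ex i -> e <> Ey i -> e <> Eb i -> sig m r e = sig m r' e.
  by move=> e; apply: (H (gr (tailG tailN tN e)).+1).
elim=> [//|N IH] e hN h1 h2 h3.
rewrite (hsig _ _ hr e) (hsig _ _ hr' e).
have -> : r e = r' e by case: (hrr e) => [//|[]].
congr Nat.lxor; case: hcode => _ _ hloc; apply: hloc => e' he'.
have hlt := hgr e'; rewrite he' in hlt.
apply: IH; first by lia.
- move=> E; subst e'; case: e he' h1 h2 h3 hN hlt => //= j [] ->; by [].
- move=> E; subst e'; case: e he' h1 h2 h3 hN hlt => //= j [] ->; by [].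
- move=> E; subst e'; case: e he' h1 h2 h3 hN hlt => //=.
Qed.


Lemma err_at i m r e0 : admissible capN n r -> tailG tailN tN e0 = NA i ->
  (forall e, r e = 0 \/ e = Ex i \/ e = Ey i) ->
  sig m r e0 = Nat.lxor (sig m (@no_err EN k) e0) (r e0).
Proof.
move=> hr ht h0.
rewrite (hsig _ _ hr e0) (hsig _ _ noerr_adm e0) /no_err Nat.lxor_0_r.
congr Nat.lxor; case: hcode => _ _ hloc; apply: hloc => e' he'.
rewrite ht in he'.
case: e' he' => //= j [] ->.
eapply (@stable i m r (@no_err EN k) hr noerr_adm) => //.
Qed.

Lemma good_err m r j : Mgood capN sig dec m -> admissible capN n r ->
  sig m r (Eb j) <> sig m (@no_err EN k) (Eb j) ->
  Berr capN sig dec (bvec sig m r) /\ dec (bvec sig m r) = m.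
Proof.
move=> hm hr hne; have hd : dec (bvec sig m r) = m by apply: hm.
split=> //; split.
  move=> j'; rewrite /bvec ffunE; have := sig_bound m r (Eb j') hr.
  by rewrite /= muln1.
case=> m' [hm' hb]; apply: hne.
have hd' : dec (bvec sig m' (@no_err EN k)) = m' by apply: hm'; exact: noerr_adm.
rewrite hb hd in hd'; subst m'.
by have := congr1 (fun f : {ffun _ -> _} => f j) hb; rewrite /bvec !ffunE => ->.
Qed.

Lemma main_aux (i : 'I_k) (zhat : nat) (m1 m2 : msg k n)
    (hm1 : Mgood capN (n:=n) sig dec m1) (hm2 : Mgood capN (n:=n) sig dec m2)
    (hz1 : sig m1 (@no_err EN k) (Ez' i) = zhat)
    (hz2 : sig m2 (@no_err EN k) (Ez' i) = zhat)
    (hb : sig m1 (@no_err EN k) (Eb i) <> sig m2 (@no_err EN k) (Eb i)) :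
  exists beta, Berr capN (n:=n) sig dec beta /\ (dec beta = m1 \/ dec beta = m2).
Proof.
set x1 := sig m1 (@no_err EN k) (Ex i); set x2 := sig m2 (@no_err EN k) (Ex i).
set y1 := sig m1 (@no_err EN k) (Ey i); set y2 := sig m2 (@no_err EN k) (Ey i).
pose rx := fun e : gedge EN k => match e with Ex j => if j == i then Nat.lxor x1 x2 else 0 | _ => 0 end.
pose ry := fun e : gedge EN k => match e with Ey j => if j == i then Nat.lxor y2 y1 else 0 | _ => 0 end.
have bnd m e : sig m (@no_err EN k) e < 2 ^ (n * capG capN e) by apply: sig_bound noerr_adm.
have hrx : admissible capN n rx.
  split.
  - case=> //= j; rewrite ?expn_gt0 //; case: ifP => _; rewrite ?expn_gt0 //.
    by apply: lxor_lt; [exact: (bnd m1 (Ex i))|exact: (bnd m2 (Ex i))].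
  - move=> e e'; case: e => //= j; case: e' => //= j'; case: ifP => // /eqP ->; case: ifP => // /eqP -> //.
  - by move=> j0; split.
have hry : admissible capN n ry.
  split.
  - case=> //= j; rewrite ?expn_gt0 //; case: ifP => _; rewrite ?expn_gt0 //.
    by apply: lxor_lt; [exact: (bnd m2 (Ey i))|exact: (bnd m1 (Ey i))].
  - move=> e e'; case: e => //= j; case: e' => //= j'; case: ifP => // /eqP ->; case: ifP => // /eqP -> //.
  - by move=> j0; split.
have h0x : forall e, rx e = 0 \/ e = Ex i \/ e = Ey i.
  case=> /=; auto; move=> j; case: ifP => [/eqP ->|]; auto.
have h0y : forall e, ry e = 0 \/ e = Ex i \/ e = Ey i.
  case=> /=; auto; move=> j; case: ifP => [/eqP ->|]; auto.
have sx : forall e, e <> Ex i -> e <> Ey i -> e <> Eb i -> sig m1 rx e = sig m1 (@no_err EN k) e.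
  apply: (@stable i m1 rx (@no_err EN k) hrx noerr_adm) => e; rewrite /no_err; case: (h0x e); auto.
have sy : forall e, e <> Ex i -> e <> Ey i -> e <> Eb i -> sig m2 ry e = sig m2 (@no_err EN k) e.
  apply: (@stable i m2 ry (@no_err EN k) hry noerr_adm) => e; rewrite /no_err; case: (h0y e); auto.
have xx : sig m1 rx (Ex i) = x2.
  rewrite (@err_at i m1 rx (Ex i) hrx erefl h0x) /= eqxx -/x1.
  by rewrite -Nat.lxor_assoc Nat.lxor_nilpotent Nat.lxor_0_l.
have xy : sig m1 rx (Ey i) = y1.
  by rewrite (@err_at i m1 rx (Ey i) hrx erefl h0x) /= Nat.lxor_0_r.
have xz : sig m1 rx (Ez' i) = zhat by rewrite -hz1; apply: sx; discriminate.
have yy : sig m2 ry (Ey i) = y1.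
  rewrite (@err_at i m2 ry (Ey i) hry erefl h0y) /= eqxx -/y2.
  by rewrite -Nat.lxor_assoc Nat.lxor_nilpotent Nat.lxor_0_l.
have yx : sig m2 ry (Ex i) = x2.
  by rewrite (@err_at i m2 ry (Ex i) hry erefl h0y) /= Nat.lxor_0_r.
have yz : sig m2 ry (Ez' i) = zhat by rewrite -hz2; apply: sy; discriminate.
have same : sig m2 ry (Eb i) = sig m1 rx (Eb i).
  rewrite (hsig _ _ hry) (hsig _ _ hrx) /=.
  congr Nat.lxor; case: hcode => _ hind hloc.
  rewrite (hind (Eb i) m2 m1) //; apply: hloc => e' /=.
  by case: e' => //= j [] ->; rewrite ?xx ?yx ?xy ?yy ?xz ?yz.
case: (eqVneq (sig m1 rx (Eb i)) (sig m1 (@no_err EN k) (Eb i))) => [e1|ne1].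
  have ne2 : sig m2 ry (Eb i) <> sig m2 (@no_err EN k) (Eb i) by rewrite same e1.
  have [hB hd] := @good_err m2 ry i hm2 hry ne2.
  by exists (bvec sig m2 ry); auto.
have [hB hd] := @good_err m1 rx i hm1 hrx (elimN eqP ne1).
by exists (bvec sig m1 rx); auto.
Qed.

End Main.

Theorem lemma2 (VN EN : finType) (k : nat)
    (tailN headN : EN -> VN) (capN : EN -> nat) (sN tN : 'I_k -> VN) (n : nat)
    (enc : gedge EN k -> msg k n -> (gedge EN k -> nat) -> nat)
    (sig : msg k n -> (gedge EN k -> nat) -> gedge EN k -> nat)
    (dec : {ffun 'I_k -> nat} -> msg k n)
    (hacyc : acyclicN tailN headN)
    (hcode : is_code tailN headN capN sN tN (n:=n) enc)
    (hsig : is_signal capN (n:=n) enc sig)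
    (i : 'I_k) (zhat : nat) (hz : zhat < 2 ^ n) (m1 m2 : msg k n)
    (hm1 : Mgood capN (n:=n) sig dec m1) (hm2 : Mgood capN (n:=n) sig dec m2)
    (hz1 : sig m1 (@no_err EN k) (Ez' i) = zhat)
    (hz2 : sig m2 (@no_err EN k) (Ez' i) = zhat)
    (hb : sig m1 (@no_err EN k) (Eb i) <> sig m2 (@no_err EN k) (Eb i)) :
  exists beta, Berr capN (n:=n) sig dec beta /\ (dec beta = m1 \/ dec beta = m2).
Proof. exact: (@main_aux VN EN k tailN headN capN sN tN n enc sig dec hacyc hcode hsig i zhat m1 m2 hm1 hm2 hz1 hz2 hb). Qed.
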